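(* Let $\Gamma$ be a locally finite weighted graph and let $X$ be a finite subset of its vertex set. Then the following are equivalent: (1) $\Delta(\mathbb{R}^\Gamma_{\Gamma\setminus X})=\mathbb{R}^\Gamma$; (2) there is no non-zero finitely supported function on $\Gamma$ that is harmonic on $\Gamma\setminus X$.
   Context: Weighted graph: undirected, no loops or multiple edges, weights $\omega_{xy}=\omega_{yx}>0$, $\deg x=\sum_{y\sim x}\omega_{xy}$. Laplacian: $\Delta f(x)=f(x)-\frac{1}{\deg x}\sum_{y\sim x}\omega_{xy}f(y)$ for $f\in\mathbb{R}^\Gamma$. For a set $Y$ of vertices, $\mathbb{R}^\Gamma_Y$ denotes the space of functions $\Gamma\to\mathbb{R}$ supported on $Y$. A function is harmonic on $A$ if $\Delta f(x)=0$ for all $x\in A$. *)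

(* Defs.v *)
From HB Require Import structures.
From mathcomp Require Import all_boot all_order all_algebra.
From mathcomp Require Import reals.
Set Implicit Arguments. Unset Strict Implicit. Unset Printing Implicit Defensive.
Import Order.TTheory GRing.Theory Num.Theory.
Local Open Scope ring_scope.

(* A locally finite weighted graph on a (possibly infinite) vertex type V:
   each vertex x has a finite duplicate-free list of neighbours [nbrs x]
   (local finiteness), adjacency is symmetric and loop-free (no loops, no
   multiple edges), and each edge carries a symmetric positive weight.
   Values of [w] on non-edges are irrelevant. *)
Record wgraph (V : eqType) (R : realType) := WGraph {
  nbrs : V -> seq V;
  w : V -> V -> R;
  nbrs_uniq : forall x, uniq (nbrs x);
  nbrs_irr : forall x, x \notin nbrs x;
  nbrs_sym : forall x y, (y \in nbrs x) = (x \in nbrs y);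
  w_sym : forall x y, w x y = w y x;
  w_pos : forall x y, y \in nbrs x -> 0 < w x y
}.

Section Lap.
Variables (V : eqType) (R : realType) (G : wgraph V R).

Definition deg (x : V) : R := \sum_(y <- nbrs G x) w G x y.

Definition lap (f : V -> R) (x : V) : R :=
  f x - (deg x)^-1 * \sum_(y <- nbrs G x) w G x y * f y.

Definition harmonic_on (f : V -> R) (A : V -> bool) : Prop :=
  forall x, A x -> lap f x = 0.
End Lap.

(* f belongs to R^Gamma_Y: support of f contained in Y *)
Definition supported_on (V : Type) (R : realType) (f : V -> R) (Y : V -> bool) : Prop :=
  forall x, ~~ Y x -> f x = 0.

Definition fin_supp (V : eqType) (R : realType) (f : V -> R) : Prop :=
  exists s : seq V, forall x, f x != 0 -> x \in s.

(* Main.v *)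
Require Import Defs.
From HB Require Import structures.
From mathcomp Require Import all_boot all_order all_algebra.
From mathcomp Require Import reals.
From mathcomp Require Import boolp classical_sets ring.
Import Order.TTheory GRing.Theory Num.Theory.
Local Open Scope ring_scope.

Section Ext.
Variables (D : Type) (R : realType) (I : Type) (b : I -> D -> R) (t : I -> R).

Definition lc (a : R) (u v : D -> R) := fun x => a * u x + v x.
Definition zf : D -> R := fun _ => 0.
Definition comb (l : seq (I * R)) := fun x => \sum_(p <- l) p.2 * b p.1 x.
Definition tsum (l : seq (I * R)) := \sum_(p <- l) p.2 * t p.1.

Hypothesis hcons : forall l, (forall x, comb l x = 0) -> tsum l = 0.

Definition good (W : (D -> R) -> Prop) (psi : (D -> R) -> R) :=
  [/\ W zf, (forall a u v, W u -> W v -> W (lc a u v)),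
      (forall a u v, W u -> W v -> psi (lc a u v) = a * psi u + psi v)
    & forall i, W (b i) /\ psi (b i) = t i].

Definition ext (W1 : (D -> R) -> Prop) (psi1 : (D -> R) -> R) W2 psi2 :=
  (forall u, W1 u -> W2 u) /\ (forall u, W1 u -> psi2 u = psi1 u).

Lemma comb_wd l1 l2 : comb l1 = comb l2 -> tsum l1 = tsum l2.
Proof.
move=> e; apply/eqP; rewrite -subr_eq0; apply/eqP.
set l := l1 ++ [seq (p.1, - p.2) | p <- l2].
have c0 : forall x, comb l x = 0.
  move=> x; rewrite /comb big_cat big_map /=.
  have -> : \sum_(j <- l2) - j.2 * b j.1 x = - comb l2 x.
    by rewrite /comb -sumrN; apply: eq_bigr => p _; rewrite mulNr.
  by rewrite -e subrr.
have h := hcons _ c0; rewrite /tsum big_cat big_map /= in h; apply: etrans h.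
by rewrite -sumrN; congr (_ + _); apply: eq_bigr => p _; rewrite mulNr.
Qed.

Definition W0 u := exists l, u = comb l.
Definition psi0 u := match pselect (W0 u) with
  | left h => tsum (sval (cid h)) | right _ => 0 end.

Lemma psi0E l : psi0 (comb l) = tsum l.
Proof.
rewrite /psi0; case: pselect => [h|[]]; last by exists l.
by case: cid => l' /= e; apply: comb_wd.
Qed.

Lemma good0 : good W0 psi0.
Proof.
have lcE a l1 l2 : lc a (comb l1) (comb l2)
    = comb ([seq (p.1, a * p.2) | p <- l1] ++ l2).
  apply: funext => x; rewrite /lc /comb big_cat big_map mulr_sumr /=.
  by congr (_ + _); apply: eq_bigr => p _; rewrite mulrA.
split.
- by exists [::]; apply: funext => x; rewrite /comb big_nil.
- by move=> a u v [l1 ->] [l2 ->]; rewrite lcE; eexists.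
- move=> a u v [l1 ->] [l2 ->]; rewrite lcE !psi0E /tsum big_cat big_map /=.
  by rewrite mulr_sumr; congr (_ + _); apply: eq_bigr => p _; rewrite mulrA.
- move=> i; have e : b i = comb [:: (i, 1)].
    by apply: funext => x; rewrite /comb big_seq1 mul1r.
  by split; [exists [:: (i, 1)] | rewrite e psi0E /tsum big_seq1 mul1r].
Qed.

Lemma psi_zero W psi : good W psi -> psi zf = 0.
Proof.
case=> W0' _ L _; have := L 1 zf zf W0' W0'.
have -> : lc 1 zf zf = zf by apply: funext => x; rewrite /lc /zf mul1r addr0.
by rewrite mul1r => h; apply: (addrI (psi zf)); rewrite addr0 -h.
Qed.

Section Step.
Variables (W : (D -> R) -> Prop) (psi : (D -> R) -> R) (c : D -> R).
Hypothesis gW : good W psi.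
Hypothesis cW : ~ W c.

Definition W' u := exists aw : R * (D -> R), W aw.2 /\ u = lc aw.1 c aw.2.
Definition psi' u := match pselect (W' u) with
  | left h => psi (sval (cid h)).2 | right _ => 0 end.

Lemma uniq_dec a1 a2 w1 w2 : W w1 -> W w2 -> lc a1 c w1 = lc a2 c w2 ->
  a1 = a2 /\ w1 = w2.
Proof.
have [Wz Wl _ _] := gW; move=> h1 h2 e.
have ex x : a1 * c x + w1 x = a2 * c x + w2 x by have := congr1 (fun f => f x) e.
have aeq : a1 = a2.
  apply/eqP; apply/negPn/negP => ne; apply: cW.
  have -> : c = lc (a1 - a2)^-1 (lc (-1) w1 zf) (lc 0 zf (lc (a1 - a2)^-1 w2 zf)).
    apply: funext => x; rewrite /lc /zf !addr0 mul0r add0r.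
    have nz : a1 - a2 != 0 by rewrite subr_eq0.
    apply: (mulfI nz); rewrite mulrDr !mulrA mulfV // !mul1r.
    have := ex x => /eqP; rewrite -subr_eq0 => /eqP h.
    apply/eqP; rewrite -subr_eq0; apply/eqP; rewrite -h; ring.
  by apply: (Wl) => //; apply: (Wl) => //; apply: (Wl).
by split=> //; apply: funext => x; have := ex x; rewrite aeq => /addrI.
Qed.

Lemma psi'E a w : W w -> psi' (lc a c w) = psi w.
Proof.
move=> hw; rewrite /psi'; case: pselect => [h|[]]; last by exists (a, w).
case: cid => [[a' w']] /= [hw' e].
by have [_ ->] := uniq_dec _ _ _ _ hw hw' e.
Qed.

Lemma good' : good W' psi'.
Proof.
have [Wz Wl L B] := gW.
have lcE a a1 a2 w1 w2 : lc a (lc a1 c w1) (lc a2 c w2) = lc (a * a1 + a2) c (lc a w1 w2).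
  by apply: funext => x; rewrite /lc; ring.
split.
- exists (0, zf); split=> //; apply: funext => x; rewrite /lc /zf /=; ring.
- move=> a u v [[a1 w1] [/= h1 ->]] [[a2 w2] [/= h2 ->]].
  by rewrite lcE; exists (a * a1 + a2, lc a w1 w2); split=> //; apply: (Wl).
- move=> a u v [[a1 w1] [/= h1 ->]] [[a2 w2] [/= h2 ->]].
  by rewrite lcE !psi'E //; [apply: (L) | apply: (Wl)].
- move=> i; have [hb eb] := B i.
  have e : b i = lc 0 c (b i) by apply: funext => x; rewrite /lc mul0r add0r.
  split; first by exists (0, b i).
  by rewrite e psi'E.
Qed.

Lemma ext' : ext W psi W' psi'.
Proof.
have e w : w = lc 0 c w by apply: funext => x; rewrite /lc mul0r add0r.
split=> u hu; first by exists (0, u).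
by rewrite {1}(e u) psi'E.
Qed.

Lemma cW' : W' c.
Proof.
have [Wz _ _ _] := gW; exists (1, zf); split=> //.
by apply: funext => x; rewrite /lc /zf mul1r addr0.
Qed.
End Step.

Definition T := {p : ((D -> R) -> Prop) * ((D -> R) -> R) | good p.1 p.2}.
Definition Rel (s1 s2 : T) := `[< ext (sval s1).1 (sval s1).2 (sval s2).1 (sval s2).2 >].

Lemma main_ext : exists psi : (D -> R) -> R,
  (forall a u v, psi (lc a u v) = a * psi u + psi v) /\ forall i, psi (b i) = t i.
Proof.
pose t0 : T := exist _ (W0, psi0) good0.
have [|||m mmax] := @ZL_preorder T t0 Rel.
- by move=> s; apply/asboolP; split.
- move=> r s u /asboolP [h1 h2] /asboolP [h3 h4]; apply/asboolP; split.
    by move=> v /h1 /h3.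
  by move=> v hv; rewrite h4 ?h2 //; apply: h1.
- move=> A tot.
  case: (pselect (exists s, A s)) => [[s0 As0]|nA]; last first.
    by exists t0 => s As; case: nA; exists s.
  pose Wu u := exists s, A s /\ (sval s).1 u.
  pose psiu u := match pselect (Wu u) with
    | left h => (sval (sval (cid h))).2 u | right _ => 0 end.
  have key s u : A s -> (sval s).1 u -> psiu u = (sval s).2 u.
    move=> As hu; rewrite /psiu; case: pselect => [h|[]]; last by exists s.
    case: cid => s' [As' hu'] /=.
    case: (tot s s' As As') => /asboolP [h1 h2].
      by rewrite h2.
    by rewrite h2.
  have gu : good Wu psiu.
    have [Wz _ _ B0] := svalP s0.
    have up s1 s2 : A s1 -> A s2 -> exists s, [/\ A s, Rel s1 s & Rel s2 s].
      move=> A1 A2; case: (tot s1 s2 A1 A2) => h.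
        by exists s2; split=> //; apply/asboolP; split.
      by exists s1; split=> //; apply/asboolP; split.
    split.
    + by exists s0.
    + move=> a u v [s1 [A1 h1]] [s2 [A2 h2]].
      have [s [As /asboolP[e1 _] /asboolP[e2 _]]] := up s1 s2 A1 A2.
      exists s; split=> //; have [_ Wl _ _] := svalP s.
      by apply: (Wl); [apply: e1 | apply: e2].
    + move=> a u v [s1 [A1 h1]] [s2 [A2 h2]].
      have [s [As /asboolP[e1 _] /asboolP[e2 _]]] := up s1 s2 A1 A2.
      have [_ Wl L _] := svalP s.
      rewrite (key s) //; last by apply: (Wl); [apply: e1 | apply: e2].
      by rewrite L ?(key s u) ?(key s v) //; [apply: e2 | apply: e1 | apply: e1 | apply: e2].
    + move=> i; have [hb eb] := B0 i; split; first by exists s0.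
      by rewrite (key s0).
  exists (exist _ (Wu, psiu) gu) => s As; apply/asboolP; split=> /=.
    by move=> u hu; exists s.
  by move=> u hu; apply: key.
- have gm := svalP m.
  have allW : forall u, (sval m).1 u.
    move=> c; apply/not_notP => nc.
    have g' := good' _ _ _ gm nc.
    pose m' : T := exist _ (W' (sval m).1 c, psi' (sval m).1 (sval m).2 c) g'.
    have r : Rel m m' by apply/asboolP; exact: (ext' _ _ _ gm nc).
    have /asboolP [h _] := mmax m' r.
    by apply: nc; apply: h; exact: (cW' _ _ _ gm).
  have [_ _ L B] := gm.
  exists (sval m).2; split; first by move=> a u v; apply: L.
  by move=> i; have [] := B i.
Qed.
End Ext.

Section Gr.
Variables (V : eqType) (R : realType) (G : wgraph V R) (X : seq V).

Definition dd x : R := if deg G x == 0 then 1 else deg G x.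
Definition M (f : V -> R) x := dd x * f x - \sum_(y <- nbrs G x) w G x y * f y.
Definition delta (y : V) : V -> R := fun x => if x == y then 1 else 0.

Lemma dd_neq0 x : dd x != 0.
Proof. by rewrite /dd; case: ifP => [_|/negbT //]; apply: oner_neq0. Qed.

Lemma deg0_nil x : deg G x = 0 -> nbrs G x = [::].
Proof.
rewrite /deg; case E: (nbrs G x) => [|y s] //; rewrite big_cons => h.
have hy : 0 < w G x y by apply: w_pos; rewrite E mem_head.
have hs : 0 <= \sum_(z <- s) w G x z.
  rewrite big_seq; apply: sumr_ge0 => z zs; apply/ltW/w_pos.
  by rewrite E inE zs orbT.
have : 0 < w G x y + \sum_(z <- s) w G x z by apply: (lt_le_trans hy); rewrite lerDl.
by rewrite h ltxx.
Qed.

Lemma M_lap f x : M f x = dd x * lap G f x.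
Proof.
rewrite /M /lap /dd; case: eqP => [h|/eqP h].
  by rewrite (deg0_nil _ h) !big_nil mulr0 !subr0 !mul1r.
by rewrite mulrBr mulrA mulfV // mul1r.
Qed.

Lemma sum_delta (r : seq V) (F : V -> R) x : uniq r ->
  \sum_(z <- r) F z * (if z == x then 1 else 0) = if x \in r then F x else 0.
Proof.
elim: r => [|a r IH] /=; first by rewrite big_nil.
move=> /andP [ar ur]; rewrite big_cons IH // inE.
case: (eqVneq a x) => [<-|ne].
  by rewrite (negbTE ar) ?eqxx mulr1 addr0.
by rewrite mulr0 add0r.
Qed.

Lemma M_lin (I : Type) (r : seq I) (c : I -> R) (F : I -> V -> R) x :
  M (fun y => \sum_(i <- r) c i * F i y) x = \sum_(i <- r) c i * M (F i) x.
Proof.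
rewrite /M; transitivity (\sum_(i <- r) c i * (dd x * F i x)
   - \sum_(i <- r) \sum_(z <- nbrs G x) c i * (w G x z * F i z)).
  congr (_ - _).
    by rewrite mulr_sumr; apply: eq_bigr => i _; ring.
  rewrite exchange_big; apply: eq_bigr => z _; rewrite mulr_sumr.
  by apply: eq_bigr => i _; ring.
by rewrite -sumrB; apply: eq_bigr => i _; rewrite mulrBr mulr_sumr.
Qed.

Lemma swap_filter (a b : seq V) (F : V -> R) : uniq a -> uniq b ->
  \sum_(x <- a | x \in b) F x = \sum_(x <- b | x \in a) F x.
Proof.
move=> ua ub; rewrite -big_filter -[RHS]big_filter; apply: perm_big; apply: uniq_perm;
  rewrite ?filter_uniq // => x; rewrite !mem_filter.
by rewrite andbC.
Qed.

Lemma adj (h f : V -> R) (s : seq V) : (forall x, h x != 0 -> x \in s) ->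
  \sum_(x <- undup (s ++ flatten (map (nbrs G) s))) h x * M f x
  = \sum_(x <- undup (s ++ flatten (map (nbrs G) s))) f x * M h x.
Proof.
move=> hs; set T := undup _.
have uT : uniq T by apply: undup_uniq.
have sT x : x \in s -> x \in T by move=> xs; rewrite mem_undup mem_cat xs.
have nT x z : x \in s -> z \in nbrs G x -> z \in T.
  move=> xs zx; rewrite mem_undup mem_cat; apply/orP; right.
  by apply/flatten_mapP; exists x.
have hz x : x \notin T -> h x = 0.
  by move=> xT; apply/eqP; apply: contraR xT => /hs; apply: sT.
have conv (x : V) (F : V -> R) : (forall z, z \in nbrs G x -> z \notin T -> F z = 0) ->
    \sum_(z <- nbrs G x) F z = \sum_(z <- T | z \in nbrs G x) F z.
  move=> H; rewrite -(@big_rmcond_in _ _ _ _ _ (fun z => z \in T)) //.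
  by rewrite swap_filter // nbrs_uniq.
rewrite /M.
under eq_bigr do rewrite mulrBr mulr_sumr.
under [RHS]eq_bigr do rewrite mulrBr mulr_sumr.
rewrite !sumrB; congr (_ - _).
  by apply: eq_bigr => x _; ring.
transitivity (\sum_(x <- T) \sum_(z <- T | z \in nbrs G x) h x * (w G x z * f z)).
  apply: eq_bigr => x _; apply: conv => z zx zT.
  case: (boolP (x \in s)) => xs; first by rewrite (nT x z xs zx) in zT.
  by rewrite (_ : h x = 0) ?mul0r //; apply/eqP; apply: contraR xs; apply: hs.
transitivity (\sum_(x <- T) \sum_(z <- T | z \in nbrs G x) f x * (w G x z * h z)); last first.
  apply: esym; apply: eq_bigr => x _; apply: conv => z zx zT.
  by rewrite (hz z zT) !mulr0.
under eq_bigr do rewrite big_mkcond.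
under [RHS]eq_bigr do rewrite big_mkcond.
rewrite [RHS]exchange_big; apply: eq_bigr => x _; apply: eq_bigr => z _.
by rewrite nbrs_sym w_sym; case: ifP => _; rewrite ?mulrA ?mulrCA; ring.
Qed.


Definition b y : V -> R := fun x => if x \in X then 0 else M (delta y) x.
Definition mdelta y : V -> R := fun x => if x \in X then 0 else delta y x.

Lemma b_decomp y : b y = lc V R (dd y) (mdelta y)
   (fun x => \sum_(z <- nbrs G y) (- w G y z) * mdelta z x).
Proof.
apply: funext => x; rewrite /lc /b /mdelta; case: ifP => xX.
  by rewrite mulr0 add0r big1 // => z _; rewrite mulr0.
rewrite /M /delta (sum_delta (nbrs G x) (w G x) y (nbrs_uniq G x)).
under [in RHS]eq_bigr => z _ do rewrite (eq_sym x z).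
rewrite (sum_delta (nbrs G y) (fun z => - w G y z) x (nbrs_uniq G y)).
case: (eqVneq x y) => [->|ne].
  by rewrite (negbTE (nbrs_irr G y)) subr0 addr0.
by rewrite nbrs_sym w_sym !mulr0 add0r; case: ifP => _; rewrite ?oppr0 ?sub0r ?subr0 ?addr0.
Qed.

Lemma cons_ok (g : V -> R)
  (H2 : ~ (exists f : V -> R, [/\ fin_supp f, exists x, f x != 0
                          & harmonic_on G f (fun x => x \notin X)]))
  (l : seq (V * R)) :
  (forall x, comb _ _ _ b l x = 0) -> tsum _ _ (fun y => dd y * g y) l = 0.
Proof.
move=> hc; pose h := fun x => \sum_(p <- l) p.2 * delta p.1 x.
have hz : forall x, h x = 0.
  move=> x; apply/eqP; apply: contraT => nz; exfalso; apply: H2; exists h; split.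
  - exists (map fst l) => y; apply: contraR => ny; apply/eqP.
    rewrite /h big1_seq // => p /andP [_ pl].
    rewrite /delta; case: eqP => [e|_]; last by rewrite mulr0.
    by move: ny; rewrite e (map_f fst pl).
  - by exists x.
  - move=> y /= hy; apply/eqP.
    have e : M h y = 0.
      rewrite /h (M_lin _ l (fun p => p.2) (fun p => delta p.1)); apply: etrans (hc y); rewrite /comb.
      by apply: eq_bigr => p _; rewrite /b (negbTE hy).
    by move: e; rewrite M_lap => /eqP; rewrite mulf_eq0 (negbTE (dd_neq0 y)).
rewrite /tsum; transitivity (\sum_(y <- undup (map fst l)) h y * (dd y * g y)).
  rewrite /h; under [RHS]eq_bigr do rewrite mulr_suml.
  rewrite [RHS]exchange_big /=; apply: eq_big_seq => p pl.
  transitivity (p.2 * \sum_(y <- undup (map fst l)) (dd y * g y) * (if y == p.1 then 1 else 0)).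
    by rewrite sum_delta ?undup_uniq // mem_undup map_f.
  by rewrite mulr_sumr; apply: eq_bigr => y _; rewrite /delta; case: (y == p.1); rewrite ?mulr1 ?mulr0 ?mul0r.
by rewrite big1 // => y _; rewrite hz mul0r.
Qed.

Lemma surj (g : V -> R)
  (H2 : ~ (exists f : V -> R, [/\ fin_supp f, exists x, f x != 0
                          & harmonic_on G f (fun x => x \notin X)])) :
  exists f : V -> R, supported_on f (fun x => x \notin X) /\ forall x, lap G f x = g x.
Proof.
have [psi [L B]] := main_ext _ _ _ b (fun y => dd y * g y) (cons_ok g H2).
pose f x := psi (mdelta x).
have p0 : psi (zf V R) = 0.
  have := L 1 (zf V R) (zf V R).
  have -> : lc V R 1 (zf V R) (zf V R) = zf V R.
    by apply: funext => x; rewrite /lc /zf mul1r addr0.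
  by rewrite mul1r => h; apply: (addrI (psi (zf V R))); rewrite addr0 -h.
have psum : forall (r : seq V) (c : V -> R),
    psi (fun x => \sum_(z <- r) c z * mdelta z x) = \sum_(z <- r) c z * f z.
  elim => [|a r IH] c.
    by rewrite big_nil -p0; congr psi; apply: funext => x; rewrite big_nil.
  rewrite big_cons -IH -L; congr psi; apply: funext => x; rewrite /lc big_cons.
  done.
exists f; split.
  move=> x; rewrite negbK => xX; rewrite /f -p0; congr psi; apply: funext => y.
  rewrite /mdelta /zf /delta; case: ifP => // yX; case: eqP => // e.
  by rewrite e xX in yX.
move=> y; apply: (mulfI (dd_neq0 y)); rewrite -M_lap.
transitivity (psi (b y)); last exact: B y.
rewrite b_decomp L psum /M /f -sumrN; congr (_ + _).
by apply: eq_bigr => z _; rewrite mulNr.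
Qed.

End Gr.

Theorem lemma5p2 (V : eqType) (R : realType) (G : wgraph V R) (X : seq V) :
  (forall g : V -> R, exists f : V -> R,
      supported_on f (fun x => x \notin X) /\ forall x, lap G f x = g x)
  <->
  ~ (exists f : V -> R, [/\ fin_supp f, exists x, f x != 0
                          & harmonic_on G f (fun x => x \notin X)]).
Proof.
split; last by move=> H2 g; exact: surj.
move=> H1 [h [[s hs] [x0 hx0] hh]].
have [f [sf hf]] := H1 (fun x => if x == x0 then 1 else 0).
have := adj _ _ G h f s hs; set T := undup _.
have x0T : x0 \in T by rewrite mem_undup mem_cat (hs _ hx0).
rewrite (bigD1_seq x0) ?undup_uniq //= big1 => [|x /= ne]; last first.
  by rewrite M_lap hf (negbTE ne) !mulr0.
rewrite M_lap hf eqxx mulr1 addr0 [RHS]big1 => [|x _].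
  by move/eqP; rewrite mulf_eq0 (negbTE hx0) (negbTE (dd_neq0 _ _ G x0)).
case: (boolP (x \in X)) => xX.
  by rewrite sf ?mul0r // negbK.
by rewrite M_lap hh ?mulr0.
Qed.
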